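(* There exists an infinite, three-generated, $2$-modular lattice $K$ with zero such that $K\otimes K$ is a capped tensor product.
   Context: For a lattice $L$, define $\langle x,y,z\rangle^{(1)}=\langle x\vee(y\wedge z),y\vee(x\wedge z),z\vee(x\wedge y)\rangle$ on $L^3$, $u^{(0)}=u$, $u^{(k+1)}=(u^{(k)})^{(1)}$; $L$ is $2$-modular if $u^{(3)}=u^{(2)}$ for all $u\in L^3$. Tensor products: for join-semilattices with zero $A,B$, a bi-ideal of $A\times B$ is a down-set containing $(A\times\{0\})\cup(\{0\}\times B)$ and closed under lateral joins (joins of pairs $\langle a_0,b_0\rangle,\langle a_1,b_1\rangle$ with $a_0=a_1$ or $b_0=b_1$); $A\otimes B$ is the join-semilattice of compact elements of the algebraic lattice of all bi-ideals of $A\times B$. A bi-ideal $I$ is capped if there is a finite $\Gamma\subseteq A\times B$ such that $I$ is the down-set generated by $\Gamma\cup(A\times\{0\})\cup(\{0\}\times B)$; $A\otimes B$ is a capped tensor product if all its elements are capped. *)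

(* Defs.v *)
From mathcomp Require Import all_boot all_order.
From Stdlib Require Import List.
Set Implicit Arguments. Unset Strict Implicit. Unset Printing Implicit Defensive.
Import Order.Theory.
Local Open Scope order_scope.

Inductive gen3 {d : Order.disp_t} {K : latticeType d} (a b c : K) : K -> Prop :=
  | gen3_a : gen3 a b c a
  | gen3_b : gen3 a b c b
  | gen3_c : gen3 a b c c
  | gen3_meet x y : gen3 a b c x -> gen3 a b c y -> gen3 a b c (x `&` y)
  | gen3_join x y : gen3 a b c x -> gen3 a b c y -> gen3 a b c (x `|` y).

Definition three_generated {d : Order.disp_t} (K : latticeType d) : Prop :=
  exists a b c : K, forall x : K, gen3 a b c x.

Definition infinite_type (T : Type) : Prop :=
  ~ exists s : list T, forall x : T, In x s.

Definition step1 {d : Order.disp_t} {K : latticeType d} (u : K * K * K) : K * K * K :=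
  let '(x, y, z) := u in
  (x `|` (y `&` z), y `|` (x `&` z), z `|` (x `&` y)).

Definition two_modular {d : Order.disp_t} (K : latticeType d) : Prop :=
  forall u : K * K * K, iter 3 step1 u = iter 2 step1 u.

Section Tensor.
Context {dA dB : Order.disp_t} {A : bJoinSemilatticeType dA}
        {B : bJoinSemilatticeType dB}.

Definition pset := A * B -> Prop.

Definition is_biideal (I : pset) : Prop :=
  [/\ (forall p q : A * B, I q -> p.1 <= q.1 -> p.2 <= q.2 -> I p),
      (forall a : A, I (a, \bot)),
      (forall b : B, I (\bot, b)),
      (forall (a : A) (b0 b1 : B), I (a, b0) -> I (a, b1) -> I (a, b0 `|` b1))
    & (forall (a0 a1 : A) (b : B), I (a0, b) -> I (a1, b) -> I (a0 `|` a1, b))].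

(* bi-ideal generated by X: intersection of all bi-ideals containing X;
   this is the join in the (algebraic) lattice of bi-ideals *)
Definition biideal_closure (X : pset) : pset :=
  fun p => forall I : pset, is_biideal I -> (forall q, X q -> I q) -> I p.

Definition psubset (X Y : pset) : Prop := forall p, X p -> Y p.

Definition compact_biideal (I : pset) : Prop :=
  is_biideal I /\
  forall (T : Type) (F : T -> pset),
    (forall t, is_biideal (F t)) ->
    psubset I (biideal_closure (fun p => exists t, F t p)) ->
    exists s : list T,
      psubset I (biideal_closure (fun p => exists t, In t s /\ F t p)).

Definition capped (I : pset) : Prop :=
  exists Gamma : list (A * B),
    forall p : A * B,
      I p <-> exists q : A * B,
        (In q Gamma \/ q.2 = \bot \/ q.1 = \bot) /\ p.1 <= q.1 /\ p.2 <= q.2.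

End Tensor.

(* A (x) B is a capped tensor product: all its elements (the compact
   bi-ideals of A x B) are capped *)
Definition capped_tensor {dA dB : Order.disp_t}
  (A : bJoinSemilatticeType dA) (B : bJoinSemilatticeType dB) : Prop :=
  forall I : @pset dA dB A B, compact_biideal I -> capped I.

(* Main.v *)
Require Import Defs.
From mathcomp Require Import all_boot all_order.
From HB Require Import structures.
From mathcomp Require Import zify.
From Stdlib Require Import Classical.
From Stdlib Require List.
Set Implicit Arguments. Unset Strict Implicit. Unset Printing Implicit Defensive.
Import Order.Theory.

Inductive K := Z | B | XA of nat | XC of nat | YE of nat | YO of nat.

Definition tg (p : K) : nat := match p with Z => 0 | B => 1 | XA _ => 2 | XC _ => 3 | YE _ => 4 | YO _ => 5 end.
Definition idx (p : K) : nat := match p with XA n | XC n | YE n | YO n => n | _ => 0 end.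
Definition mk (t n : nat) : K :=
  match t with 0 => Z | 1 => B | 2 => XA n | 3 => XC n | 4 => YE n | _ => YO n end.
Lemma mkK : cancel (fun p => (tg p, idx p)) (fun q => mk q.1 q.2).
Proof. by case. Qed.
HB.instance Definition _ := Countable.copy K (can_type mkK).

Definition kle (p q : K) : bool :=
  match p, q with
  | Z, _ => true
  | _, Z => false
  | B, B | B, YE _ | B, YO _ => true
  | B, _ => false
  | XA n, XA m => m <= n
  | XA n, YE m => m <= n
  | XA n, YO m => m < n
  | XC n, XC m => m <= n
  | XC n, YE m => m <= n
  | XC n, YO m => m <= n
  | YE n, YE m => m <= n
  | YE n, YO m => m < n
  | YO n, YE m => m <= n
  | YO n, YO m => m <= n
  | _, _ => false
  end.

Definition kjoin (p q : K) : K :=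
  match p, q with
  | Z, q => q
  | p, Z => p
  | B, B => B
  | B, XA m | XA m, B => YE m
  | B, XC m | XC m, B => YO m
  | B, q => q
  | p, B => p
  | XA n, XA m => XA ((if n <= m then n else m))
  | XC n, XC m => XC ((if n <= m then n else m))
  | XA n, XC m | XC m, XA n => if n <= m then YE n else YO m
  | XA n, YE m | YE m, XA n => YE ((if n <= m then n else m))
  | XA n, YO m | YO m, XA n => if n <= m then YE n else YO m
  | XC n, YE m | YE m, XC n => if m <= n then YE m else YO n
  | XC n, YO m | YO m, XC n => YO ((if n <= m then n else m))
  | YE n, YE m => YE ((if n <= m then n else m))
  | YO n, YO m => YO ((if n <= m then n else m))
  | YE n, YO m | YO m, YE n => if n <= m then YE n else YO m
  end.

Definition kmeet (p q : K) : K :=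
  match p, q with
  | Z, _ | _, Z => Z
  | B, B => B
  | B, XA _ | XA _, B | B, XC _ | XC _, B => Z
  | B, _ => B
  | _, B => B
  | XA n, XA m => XA ((if n <= m then m else n))
  | XC n, XC m => XC ((if n <= m then m else n))
  | XA _, XC _ | XC _, XA _ => Z
  | XA n, YE m | YE m, XA n => XA ((if n <= m then m else n))
  | XA n, YO m | YO m, XA n => XA ((if n <= m.+1 then m.+1 else n))
  | XC n, YE m | YE m, XC n => XC ((if n <= m then m else n))
  | XC n, YO m | YO m, XC n => XC ((if n <= m then m else n))
  | YE n, YE m => YE ((if n <= m then m else n))
  | YO n, YO m => YO ((if n <= m then m else n))
  | YE n, YO m | YO m, YE n => if m < n then YE n else YO m
  end.

Ltac inner_if :=
  match goal with |- context [if ?b then _ else _] =>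
    lazymatch b with context [if _ then _ else _] => fail | _ => let E := fresh "E" in case E: b end end.

Ltac crush := repeat (simpl; first [ inner_if | idtac ]; try lia).

Lemma kle_refl : reflexive kle. Proof. by case => //= n. Qed.
Lemma kle_anti : antisymmetric kle.
Proof. case=> [||n|n|n|n] [||m|m|m|m] //= /andP[H1 H2]; first [f_equal; lia | exfalso; lia]. Qed.
Lemma kle_trans : transitive kle.
Proof. case=> [||n|n|n|n] [||m|m|m|m] [||k|k|k|k] //=; lia. Qed.

Lemma kmeetP x y z : kle x (kmeet y z) = kle x y && kle x z.
Proof.
case: x => [||n|n|n|n]; case: y => [||m|m|m|m]; case: z => [||k|k|k|k]; crush.
Qed.
Lemma kjoinP x y z : kle (kjoin x y) z = kle x z && kle y z.
Proof.
case: x => [||n|n|n|n]; case: y => [||m|m|m|m]; case: z => [||k|k|k|k]; crush.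
Qed.

Definition st (u : K * K * K) : K * K * K :=
  let '(x, y, z) := u in (kjoin x (kmeet y z), kjoin y (kmeet x z), kjoin z (kmeet x y)).
Definition bal (u : K * K * K) : bool :=
  let '(x, y, z) := u in [&& kle (kmeet y z) x, kle (kmeet x z) y & kle (kmeet x y) z].





Ltac red1 := cbn [kle kmeet kjoin st bal andb].
Ltac crush3 := repeat (red1; inner_if; try (exfalso; lia)); red1.
Ltac fin := crush3; repeat (apply/andP; split); lia.
Lemma bal_Z_Z (n m : nat) (z : K) : bal (st (st (Z, Z, z))).
Proof. (case: z => [||k|k|k|k]; fin). Qed.
Lemma bal_Z_B (n m : nat) (z : K) : bal (st (st (Z, B, z))).
Proof. (case: z => [||k|k|k|k]; fin). Qed.
Lemma bal_Z_XA (n m : nat) (z : K) : bal (st (st (Z, (XA m), z))).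
Proof. (case: z => [||k|k|k|k]; fin). Qed.
Lemma bal_Z_XC (n m : nat) (z : K) : bal (st (st (Z, (XC m), z))).
Proof. (case: z => [||k|k|k|k]; fin). Qed.
Lemma bal_Z_YE (n m : nat) (z : K) : bal (st (st (Z, (YE m), z))).
Proof. (case: z => [||k|k|k|k]; fin). Qed.
Lemma bal_Z_YO (n m : nat) (z : K) : bal (st (st (Z, (YO m), z))).
Proof. (case: z => [||k|k|k|k]; fin). Qed.
Lemma bal_B_Z (n m : nat) (z : K) : bal (st (st (B, Z, z))).
Proof. (case: z => [||k|k|k|k]; fin). Qed.
Lemma bal_B_B (n m : nat) (z : K) : bal (st (st (B, B, z))).
Proof. (case: z => [||k|k|k|k]; fin). Qed.
Lemma bal_B_XA (n m : nat) (z : K) : bal (st (st (B, (XA m), z))).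
Proof. (case: z => [||k|k|k|k]; fin). Qed.
Lemma bal_B_XC (n m : nat) (z : K) : bal (st (st (B, (XC m), z))).
Proof. (case: z => [||k|k|k|k]; fin). Qed.
Lemma bal_B_YE (n m : nat) (z : K) : bal (st (st (B, (YE m), z))).
Proof. (case: z => [||k|k|k|k]; fin). Qed.
Lemma bal_B_YO (n m : nat) (z : K) : bal (st (st (B, (YO m), z))).
Proof. (case: z => [||k|k|k|k]; fin). Qed.
Lemma bal_XA_Z (n m : nat) (z : K) : bal (st (st ((XA n), Z, z))).
Proof. (case: z => [||k|k|k|k]; fin). Qed.
Lemma bal_XA_B (n m : nat) (z : K) : bal (st (st ((XA n), B, z))).
Proof. (case: z => [||k|k|k|k]; fin). Qed.
Lemma bal_XA_XA (n m : nat) (z : K) : bal (st (st ((XA n), (XA m), z))).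
Proof. (case: z => [||k|k|k|k]; fin). Qed.
Lemma bal_XA_XC (n m : nat) (z : K) : bal (st (st ((XA n), (XC m), z))).
Proof. (case: z => [||k|k|k|k]; fin). Qed.
Lemma bal_XA_YE (n m : nat) (z : K) : bal (st (st ((XA n), (YE m), z))).
Proof. (case: z => [||k|k|k|k]; fin). Qed.
Lemma bal_XA_YO (n m : nat) (z : K) : bal (st (st ((XA n), (YO m), z))).
Proof. (case: z => [||k|k|k|k]; fin). Qed.
Lemma bal_XC_Z (n m : nat) (z : K) : bal (st (st ((XC n), Z, z))).
Proof. (case: z => [||k|k|k|k]; fin). Qed.
Lemma bal_XC_B (n m : nat) (z : K) : bal (st (st ((XC n), B, z))).
Proof. (case: z => [||k|k|k|k]; fin). Qed.
Lemma bal_XC_XA (n m : nat) (z : K) : bal (st (st ((XC n), (XA m), z))).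
Proof. (case: z => [||k|k|k|k]; fin). Qed.
Lemma bal_XC_XC (n m : nat) (z : K) : bal (st (st ((XC n), (XC m), z))).
Proof. (case: z => [||k|k|k|k]; fin). Qed.
Lemma bal_XC_YE (n m : nat) (z : K) : bal (st (st ((XC n), (YE m), z))).
Proof. (case: z => [||k|k|k|k]; fin). Qed.
Lemma bal_XC_YO (n m : nat) (z : K) : bal (st (st ((XC n), (YO m), z))).
Proof. (case: z => [||k|k|k|k]; fin). Qed.
Lemma bal_YE_Z (n m : nat) (z : K) : bal (st (st ((YE n), Z, z))).
Proof. (case: z => [||k|k|k|k]; fin). Qed.
Lemma bal_YE_B (n m : nat) (z : K) : bal (st (st ((YE n), B, z))).
Proof. (case: z => [||k|k|k|k]; fin). Qed.
Lemma bal_YE_XA (n m : nat) (z : K) : bal (st (st ((YE n), (XA m), z))).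
Proof. (case: z => [||k|k|k|k]; fin). Qed.
Lemma bal_YE_XC (n m : nat) (z : K) : bal (st (st ((YE n), (XC m), z))).
Proof. (case: z => [||k|k|k|k]; fin). Qed.
Lemma bal_YE_YE (n m : nat) (z : K) : bal (st (st ((YE n), (YE m), z))).
Proof. (case: z => [||k|k|k|k]; fin). Qed.
Lemma bal_YE_YO (n m : nat) (z : K) : bal (st (st ((YE n), (YO m), z))).
Proof. (case: z => [||k|k|k|k]; fin). Qed.
Lemma bal_YO_Z (n m : nat) (z : K) : bal (st (st ((YO n), Z, z))).
Proof. (case: z => [||k|k|k|k]; fin). Qed.
Lemma bal_YO_B (n m : nat) (z : K) : bal (st (st ((YO n), B, z))).
Proof. (case: z => [||k|k|k|k]; fin). Qed.
Lemma bal_YO_XA (n m : nat) (z : K) : bal (st (st ((YO n), (XA m), z))).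
Proof. (case: z => [||k|k|k|k]; fin). Qed.
Lemma bal_YO_XC (n m : nat) (z : K) : bal (st (st ((YO n), (XC m), z))).
Proof. (case: z => [||k|k|k|k]; fin). Qed.
Lemma bal_YO_YE (n m : nat) (z : K) : bal (st (st ((YO n), (YE m), z))).
Proof. (case: z => [||k|k|k|k]; fin). Qed.
Lemma bal_YO_YO (n m : nat) (z : K) : bal (st (st ((YO n), (YO m), z))).
Proof. (case: z => [||k|k|k|k]; fin). Qed.


Fact kdisp : Order.disp_t. Proof. exact: Order.Disp tt tt. Qed.
HB.instance Definition _ := Order.Le_isPOrder.Build kdisp K kle_refl kle_anti kle_trans.
HB.instance Definition _ := Order.POrder_MeetJoin_isLattice.Build kdisp K kmeetP kjoinP.
Lemma kle0 (x : K) : kle Z x. Proof. by []. Qed.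
HB.instance Definition _ := Order.hasBottom.Build kdisp K kle0.

Local Open Scope order_scope.

Lemma kjoin_l (a b : K) : kle b a -> kjoin a b = a.
Proof. move=> h; exact: (@join_l _ K a b h). Qed.

Lemma st_bal v : bal v -> st v = v.
Proof.
case: v => [[x y] z] /and3P [h1 h2 h3] /=.
by rewrite (kjoin_l h1) (kjoin_l h2) (kjoin_l h3).
Qed.

Lemma stE (u : K * K * K) : step1 u = st u.
Proof. by case: u => [[x y] z]. Qed.

Lemma exmin (P : nat -> Prop) : (exists n, P n) -> exists n, P n /\ forall k, P k -> (n <= k)%N.
Proof.
move=> [n Pn]; apply: NNPP => H.
suff: forall k j, (j <= k)%N -> ~ P j by move/(_ n n (leqnn n)).
elim=> [|k IH] j Hj Pj.
  apply: H; exists j; split => // i _; move: Hj; rewrite leqn0 => /eqP ->; done.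
apply: H; exists j; split => // i Pi; case: (leqP j i) => // lt.
by exfalso; apply: (IH i) => //; lia.
Qed.

Lemma dick_cols (U : nat -> nat -> Prop) k : exists L : list (nat * nat),
  (forall q, List.In q L -> U q.1 q.2) /\
  forall m n, (m < k)%N -> U m n -> exists q, List.In q L /\ (q.1 <= m)%N /\ (q.2 <= n)%N.
Proof.
elim: k => [|k [L [HL1 HL2]]]; first by exists nil; split => // m n.
case: (classic (exists n, U k n)) => [/exmin [n0 [Un0 Hmin]]|Hno].
  exists ((k, n0) :: L); split.
    by move=> q [<-|/HL1].
  move=> m n Hm Umn; case: (ltnP m k) => Hmk.
    by have [q [Hq1 Hq2]] := HL2 m n Hmk Umn; exists q; split => //; right.
  have Emk : m = k by lia.
  subst m; exists (k, n0); split; [left | split] => //=; exact: Hmin.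
exists L; split => // m n Hm Umn; case: (ltnP m k) => Hmk; first exact: HL2.
have Emk : m = k by lia.
by subst m; exfalso; apply: Hno; exists n.
Qed.

Lemma dickson2 (U : nat -> nat -> Prop) : exists L : list (nat * nat),
  (forall q, List.In q L -> U q.1 q.2) /\
  forall m n, U m n -> exists q, List.In q L /\ (q.1 <= m)%N /\ (q.2 <= n)%N.
Proof.
case: (classic (exists m n, U m n)) => [[m0 [n0 U0]]|Hno]; last first.
  by exists nil; split => // m n Umn; exfalso; apply: Hno; exists m, n.
have [Lc [Hc1 Hc2]] := dick_cols U m0.
have [Lr [Hr1 Hr2]] := dick_cols (fun m n => U n m) n0.
exists ((m0, n0) :: Lc ++ List.map (fun q => (q.2, q.1)) Lr); split.
  move=> q Hq; case: Hq => [<-|Hq] //.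
  case: (List.in_app_or _ _ _ Hq) => [/Hc1 //|Hq2].
  by case: (proj1 (List.in_map_iff _ _ _) Hq2) => [q' [<- Hq']]; exact: Hr1.
move=> m n Umn; case: (ltnP m m0) => Hm.
  have [q [Hq1 Hq2]] := Hc2 m n Hm Umn.
  by exists q; split => //; right; apply: List.in_or_app; left.
case: (ltnP n n0) => Hn.
  have [q [Hq1 [Hq2 Hq3]]] := Hr2 n m Hn Umn.
  exists (q.2, q.1); split => //; right; apply: List.in_or_app; right.
  by apply/List.in_map_iff; exists q.
by exists (m0, n0); split; [left | split].
Qed.

Lemma dickson_fam (A : Type) (ts : list A) (U : A -> nat -> nat -> Prop) :
  exists L : list (A * (nat * nat)),
    (forall q, List.In q L -> U q.1 q.2.1 q.2.2) /\
    forall t, List.In t ts -> forall m n, U t m n ->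
      exists q, List.In q L /\ q.1 = t /\ (q.2.1 <= m)%N /\ (q.2.2 <= n)%N.
Proof.
elim: ts => [|t ts [L [HL1 HL2]]]; first by exists nil; split.
have [Lt [Ht1 Ht2]] := dickson2 (U t).
exists (List.map (fun q => (t, q)) Lt ++ L); split.
  move=> q Hq; case: (List.in_app_or _ _ _ Hq) => [Hq2|/HL1 //].
  by case: (proj1 (List.in_map_iff _ _ _) Hq2) => [q' [<- Hq']]; exact: Ht1.
move=> t' [<-|Hin] m n Utmn.
  have [q [Hq1 Hq2]] := Ht2 m n Utmn.
  exists (t, q); split => //; apply: List.in_or_app; left.
  by apply/List.in_map_iff; exists q.
have [q [Hq1 Hq2]] := HL2 t' Hin m n Utmn.
by exists q; split => //; apply: List.in_or_app; right.
Qed.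

Lemma le_mk (p : K) j : (j <= idx p)%N -> kle p (mk (tg p) j).
Proof. case: p => [||n|n|n|n] //= H; lia. Qed.

Lemma mk_tg p : mk (tg p) (idx p) = p. Proof. by case: p. Qed.

Definition tgs := List.list_prod (List.seq 0 6) (List.seq 0 6).
Lemma in_tgs p1 p2 : List.In (tg p1, tg p2) tgs.
Proof.
apply: List.in_prod.
  by case: p1 => /=; tauto.
by case: p2 => /=; tauto.
Qed.

Lemma bound_in (s : list K) x : List.In x s -> (idx x <= List.fold_right (fun p acc => maxn (idx p) acc) 0 s)%N.
Proof. elim: s => [//|y s IH] /= [->|/IH]; lia. Qed.

Local Open Scope order_scope.

Lemma bal2 x y z : bal (st (st (x, y, z))).
Proof.
case: x => [||n|n|n|n]; case: y => [||m|m|m|m].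
- exact: (bal_Z_Z 0 0 z).
- exact: (bal_Z_B 0 0 z).
- exact: (bal_Z_XA 0 m z).
- exact: (bal_Z_XC 0 m z).
- exact: (bal_Z_YE 0 m z).
- exact: (bal_Z_YO 0 m z).
- exact: (bal_B_Z 0 0 z).
- exact: (bal_B_B 0 0 z).
- exact: (bal_B_XA 0 m z).
- exact: (bal_B_XC 0 m z).
- exact: (bal_B_YE 0 m z).
- exact: (bal_B_YO 0 m z).
- exact: (bal_XA_Z n 0 z).
- exact: (bal_XA_B n 0 z).
- exact: (bal_XA_XA n m z).
- exact: (bal_XA_XC n m z).
- exact: (bal_XA_YE n m z).
- exact: (bal_XA_YO n m z).
- exact: (bal_XC_Z n 0 z).
- exact: (bal_XC_B n 0 z).
- exact: (bal_XC_XA n m z).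
- exact: (bal_XC_XC n m z).
- exact: (bal_XC_YE n m z).
- exact: (bal_XC_YO n m z).
- exact: (bal_YE_Z n 0 z).
- exact: (bal_YE_B n 0 z).
- exact: (bal_YE_XA n m z).
- exact: (bal_YE_XC n m z).
- exact: (bal_YE_YE n m z).
- exact: (bal_YE_YO n m z).
- exact: (bal_YO_Z n 0 z).
- exact: (bal_YO_B n 0 z).
- exact: (bal_YO_XA n m z).
- exact: (bal_YO_XC n m z).
- exact: (bal_YO_YE n m z).
- exact: (bal_YO_YO n m z).
Qed.

Lemma gen_all (x : K) : gen3 (XA 0) B (XC 0) x.
Proof.
have H : forall n, [/\ gen3 (XA 0) B (XC 0) (XA n), gen3 (XA 0) B (XC 0) (YE n),
                      gen3 (XA 0) B (XC 0) (XC n) & gen3 (XA 0) B (XC 0) (YO n)].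
  elim=> [|n [_ _ _ H4]].
    have h1 : gen3 (XA 0) B (XC 0) (XA 0) by exact: gen3_a.
    have h2 : gen3 (XA 0) B (XC 0) (YE 0).
      by have -> : YE 0 = (B `|` XA 0) by []; apply: gen3_join => //; [exact: gen3_b].
    have h3 : gen3 (XA 0) B (XC 0) (XC 0) by exact: gen3_c.
    have h4 : gen3 (XA 0) B (XC 0) (YO 0).
      by have -> : YO 0 = (B `|` XC 0) by []; apply: gen3_join => //; [exact: gen3_b].
    by split.
  have h1 : gen3 (XA 0) B (XC 0) (XA n.+1).
    by have -> : XA n.+1 = (XA 0 `&` YO n) by []; apply: gen3_meet => //; exact: gen3_a.
  have h2 : gen3 (XA 0) B (XC 0) (YE n.+1).
    by have -> : YE n.+1 = (B `|` XA n.+1) by []; apply: gen3_join => //; exact: gen3_b.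
  have h3 : gen3 (XA 0) B (XC 0) (XC n.+1).
    by have -> : XC n.+1 = (XC 0 `&` YE n.+1) by []; apply: gen3_meet => //; exact: gen3_c.
  have h4 : gen3 (XA 0) B (XC 0) (YO n.+1).
    by have -> : YO n.+1 = (B `|` XC n.+1) by []; apply: gen3_join => //; exact: gen3_b.
  by split.
case: x => [||n|n|n|n]; try by case: (H n).
  by have -> : Z = (XA 0 `&` B) by []; apply: gen3_meet; [exact: gen3_a|exact: gen3_b].
exact: gen3_b.
Qed.

Theorem theorem5p14 :
  exists (d : Order.disp_t) (K : bLatticeType d),
    [/\ infinite_type K, three_generated K, two_modular K
      & capped_tensor K K].
Proof.
exists kdisp, K; split.
- move=> [s Hs].
  have := bound_in (Hs (YE (List.fold_right (fun p acc => maxn (idx p) acc) 0 s).+1)).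
  by rewrite /= ltnn.
- by exists (XA 0), B, (XC 0); exact: gen_all.
- move=> [[x y] z].
  change (step1 (step1 (step1 (x, y, z))) = step1 (step1 (x, y, z))).
  by rewrite !stE st_bal // bal2.
- move=> I [[Hdown Hax1 Hax2 _ _] _].
  have [L [HL1 HL2]] := dickson_fam tgs (fun t m n => I (mk t.1 m, mk t.2 n)).
  exists (List.map (fun q => (mk q.1.1 q.2.1, mk q.1.2 q.2.2)) L) => -[p1 p2]; split.
    move=> Ip.
    have Ut : I (mk (tg p1, tg p2).1 (idx p1), mk (tg p1, tg p2).2 (idx p2)) by rewrite /= !mk_tg.
    have [q [Hq [Hqt [Hq1 Hq2]]]] := HL2 _ (in_tgs p1 p2) _ _ Ut.
    exists (mk q.1.1 q.2.1, mk q.1.2 q.2.2); split.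
      by left; apply/List.in_map_iff; exists q.
    by rewrite Hqt /=; split; apply: le_mk.
  move=> [q [[Hq|[Hq|Hq]] [H1 H2]]].
  - case: (proj1 (List.in_map_iff _ _ _) Hq) => [q' [Eq Hq']].
    apply: (Hdown _ q) => //; rewrite -Eq; exact: (HL1 _ Hq').
  - apply: (Hdown _ (q.1, \bot)); [exact: Hax1 | exact: H1 | by rewrite /= -Hq].
  - apply: (Hdown _ (\bot, q.2)); [exact: Hax2 | by rewrite /= -Hq | exact: H2].
Qed.
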